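(* Let $\Bbbk$ be a field, let $\mathrm{Var}$ be a variety of $\Bbbk$-algebras with one binary product defined by a set of polylinear identities, and let $\text{tri-}\mathrm{Var}$ be the corresponding replicated variety of tri-algebras. Let $X$ be a set, $\dot X=\{\dot x\mid x\in X\}$ a disjoint copy of $X$, $F=\mathrm{Var}\langle X\cup\dot X\rangle$, $\varphi:F\to F$ the algebra homomorphism with $\varphi(x)=\varphi(\dot x)=x$ ($x\in X$), and $F^{(3)}$ the space $F$ with operations $f\vdash g=\varphi(f)g$, $f\dashv g=f\varphi(g)$, $f\perp g=fg$. Let $V$ be the subalgebra of $F^{(3)}$ generated by $\dot X$. Then $V$ is isomorphic to the free algebra in $\text{tri-}\mathrm{Var}$ generated by $X$; more precisely, for every $A\in\text{tri-}\mathrm{Var}$ and every map $\alpha:X\to A$ there is a unique homomorphism of tri-algebras $\chi:V\to A$ with $\chi(\dot x)=\alpha(x)$ for all $x\in X$.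
   Context: Tri-algebras: linear spaces with three bilinear operations $\dashv$ (=$\mu_{\{1\}}$), $\vdash$ (=$\mu_{\{2\}}$), $\perp$ (=$\mu_{\{1,2\}}$). For a polylinear element $\Phi(x_1,\dots,x_n)$ of the free algebra in one binary operation $\mu$ and nonempty $H\subseteq\{1,\dots,n\}$, $\Phi_H$ is obtained by viewing each monomial as a binary rooted tree with leaves $x_1,\dots,x_n$, marking the leaves $x_i$, $i\in H$, and replacing the label $\mu$ at each node by $\mu_S$, where $S\subseteq\{1,2\}$ is the set of branches (left=1, right=2) containing a marked leaf, or by $\mu_{\{1\}}$ if $S=\varnothing$. The variety $\text{tri-}\mathrm{Var}$ consists of tri-algebras satisfying $(a* b)\vdash c=(a\star b)\vdash c$ and $a\dashv(b* c)=a\dashv(b\star c)$ for all $*,\star\in\{\vdash,\dashv,\perp\}$, and $\Phi_H=0$ for every defining polylinear identity $\Phi$ of $\mathrm{Var}$ of degree $n$ and every nonempty $H\subseteq\{1,\dots,n\}$. *)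

(* Defs.v *)
From HB Require Import structures.
From mathcomp Require Import all_boot all_order all_algebra.
Set Implicit Arguments. Unset Strict Implicit. Unset Printing Implicit Defensive.
Import GRing.Theory.
Local Open Scope ring_scope.

(* Binary rooted trees with leaves labelled by variable indices
   (variable x_{i+1} of the paper is index i; indices start at 0). *)
Inductive btree := Leaf of nat | Node of btree & btree.

Fixpoint leaves (t : btree) : seq nat :=
  match t with Leaf i => [:: i] | Node l r => leaves l ++ leaves r end.

Section Defs.
Variable K : fieldType.

(* An element of the free (nonassociative) algebra in one binary operation,
   of declared degree n = P.1, given as a finite linear combination P.2 of
   monomials (binary trees). *)
Definition poly_identity := (nat * seq (K * btree))%type.

Definition polylinear (P : poly_identity) : bool :=
  all (fun ct => perm_eq (leaves ct.2) (iota 0 P.1)) P.2.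

Definition bilinear_op (A : lmodType K) (m : A -> A -> A) : Prop :=
  forall (c : K) (x y z : A),
    m (c *: x + y) z = c *: m x z + m y z /\
    m z (c *: x + y) = c *: m z x + m z y.

Fixpoint evalT (A : lmodType K) (mul : A -> A -> A) (a : nat -> A) (t : btree) : A :=
  match t with
  | Leaf i => a i
  | Node l r => mul (evalT mul a l) (evalT mul a r)
  end.

Definition eval_id (A : lmodType K) (mul : A -> A -> A) (a : nat -> A)
  (P : poly_identity) : A :=
  \sum_(ct <- P.2) ct.1 *: evalT mul a ct.2.

Definition in_Var (Ids : poly_identity -> Prop) (A : lmodType K)
  (mul : A -> A -> A) : Prop :=
  bilinear_op mul /\ forall P, Ids P -> forall a : nat -> A, eval_id mul a P = 0.

Definition alg_hom (A B : lmodType K) (mA : A -> A -> A) (mB : B -> B -> B)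
  (f : A -> B) : Prop :=
  (forall (c : K) x y, f (c *: x + y) = c *: f x + f y) /\
  (forall x y, f (mA x y) = mB (f x) (f y)).

Definition free_Var_alg (Ids : poly_identity -> Prop) (G : Type)
  (F : lmodType K) (mF : F -> F -> F) (iota : G -> F) : Prop :=
  in_Var Ids mF /\
  forall (B : lmodType K) (mB : B -> B -> B), in_Var Ids mB ->
  forall beta : G -> B,
    exists f : F -> B,
      [/\ alg_hom mF mB f, (forall g, f (iota g) = beta g) &
          forall f' : F -> B, alg_hom mF mB f' ->
            (forall g, f' (iota g) = beta g) -> forall y, f' y = f y].

(* Phi_H: at each node use mu_S, S = set of branches containing a marked leaf;
   dl = mu_{1} (-|), dr = mu_{2} (|-), pp = mu_{1,2} (perp); S empty -> dl. *)
Fixpoint evalH (A : lmodType K) (dl dr pp : A -> A -> A) (H : pred nat)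
  (a : nat -> A) (t : btree) : A :=
  match t with
  | Leaf i => a i
  | Node l r =>
      let o := match has H (leaves l), has H (leaves r) with
               | false, true => dr
               | true, true => pp
               | _, _ => dl
               end in
      o (evalH dl dr pp H a l) (evalH dl dr pp H a r)
  end.

Definition eval_idH (A : lmodType K) (dl dr pp : A -> A -> A) (H : pred nat)
  (a : nat -> A) (P : poly_identity) : A :=
  \sum_(ct <- P.2) ct.1 *: evalH dl dr pp H a ct.2.

Definition triop (A : Type) (dl dr pp : A -> A -> A) (i : 'I_3) : A -> A -> A :=
  match val i with 0 => dl | 1 => dr | _ => pp end.

Definition tri_identities_on (Ids : poly_identity -> Prop) (A : lmodType K)
  (D : A -> Prop) (dl dr pp : A -> A -> A) : Prop :=
  (forall (i j : 'I_3) (x y z : A), D x -> D y -> D z ->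
     dr (triop dl dr pp i x y) z = dr (triop dl dr pp j x y) z /\
     dl x (triop dl dr pp i y z) = dl x (triop dl dr pp j y z)) /\
  (forall P, Ids P -> forall H : pred nat, (exists2 k, (k < P.1)%N & H k) ->
     forall a : nat -> A, (forall k, D (a k)) -> eval_idH dl dr pp H a P = 0).

Definition in_triVar (Ids : poly_identity -> Prop) (A : lmodType K)
  (dl dr pp : A -> A -> A) : Prop :=
  [/\ bilinear_op dl, bilinear_op dr, bilinear_op pp &
      tri_identities_on Ids (fun _ => True) dl dr pp].

Definition gen_subalg (F : lmodType K) (dl dr pp : F -> F -> F)
  (S : F -> Prop) (f : F) : Prop :=
  forall P : F -> Prop,
    (forall s, S s -> P s) -> P 0 ->
    (forall (c : K) x y, P x -> P y -> P (c *: x + y)) ->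
    (forall x y, P x -> P y -> [/\ P (dl x y), P (dr x y) & P (pp x y)]) ->
    P f.

Definition tri_hom_on (F A : lmodType K) (D : F -> Prop)
  (dlF drF ppF : F -> F -> F) (dl dr pp : A -> A -> A) (chi : F -> A) : Prop :=
  (forall (c : K) x y, D x -> D y -> chi (c *: x + y) = c *: chi x + chi y) /\
  (forall x y, D x -> D y ->
     [/\ chi (dlF x y) = dl (chi x) (chi y),
         chi (drF x y) = dr (chi x) (chi y) &
         chi (ppF x y) = pp (chi x) (chi y)]).

End Defs.

(* Main.v *)
From HB Require Import structures.
From mathcomp Require Import all_boot all_order all_algebra.
From mathcomp Require Import boolp functions.
Require Import Defs.
Set Implicit Arguments. Unset Strict Implicit. Unset Printing Implicit Defensive.
Import GRing.Theory.
Local Open Scope ring_scope.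

HB.instance Definition _ := gen_eqMixin btree.

Section Gen.
Variable K : fieldType.

Section Bil.
Variables (M : lmodType K) (m : M -> M -> M) (Hm : bilinear_op m).
Lemma bilDl x y z : m (x + y) z = m x z + m y z.
Proof. by have := (Hm 1 x y z).1; rewrite !scale1r. Qed.
Lemma bilDr x y z : m z (x + y) = m z x + m z y.
Proof. by have := (Hm 1 x y z).2; rewrite !scale1r. Qed.
Lemma bil0l z : m 0 z = 0.
Proof. by apply: (addrI (m 0 z)); rewrite -bilDl !addr0. Qed.
Lemma bil0r z : m z 0 = 0.
Proof. by apply: (addrI (m z 0)); rewrite -bilDr !addr0. Qed.
Lemma bilZl c x z : m (c *: x) z = c *: m x z.
Proof. by have := (Hm c x 0 z).1; rewrite addr0 bil0l addr0. Qed.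
Lemma bilZr c x z : m z (c *: x) = c *: m z x.
Proof. by have := (Hm c x 0 z).2; rewrite addr0 bil0r addr0. Qed.
End Bil.

Section Hom.
Variables (M N P : lmodType K) (mM : M -> M -> M) (mN : N -> N -> N) (mP : P -> P -> P).
Lemma hom0 f : alg_hom mM mN f -> f 0 = 0.
Proof.
case=> hl _; apply: (addrI (f 0)); rewrite addr0.
by rewrite -[X in X + _](scale1r (f 0)) -hl scale1r addr0.
Qed.
Lemma hom_comp f g : alg_hom mM mN f -> alg_hom mN mP g -> alg_hom mM mP (g \o f).
Proof.
case=> f1 f2 [g1 g2]; split=> [c x y|x y] /=; first by rewrite f1 g1.
by rewrite f2 g2.
Qed.
End Hom.

Lemma evalT_ext (M : lmodType K) (mul : M -> M -> M) a a' t :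
  (forall i, i \in leaves t -> a i = a' i) -> evalT mul a t = evalT mul a' t.
Proof.
elim: t => [i|l IHl r IHr] /= h; first by apply: h; rewrite inE.
by rewrite IHl ?IHr // => i hi; apply: h; rewrite mem_cat hi ?orbT.
Qed.

Lemma evalH_unmarked (M : lmodType K) (dl dr pp : M -> M -> M) H a t :
  ~~ has H (leaves t) -> evalH dl dr pp H a t = evalT dl a t.
Proof.
elim: t => [i|l IHl r IHr] //=; rewrite has_cat negb_or => /andP [hl hr].
by rewrite (negbTE hl) (negbTE hr) IHl // IHr.
Qed.

Lemma notH (H : pred nat) s i : ~~ has H s -> i \in s -> H i = false.
Proof. by move=> /hasPn h /h /negbTE. Qed.

Definition upd (M : Type) (a : nat -> M) k u := fun i => if i == k then u else a i.

Lemma evalT_upd0 (M : lmodType K) (mul : M -> M -> M) a k u t :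
  k \notin leaves t -> evalT mul (upd a k u) t = evalT mul a t.
Proof.
move=> hk; apply: evalT_ext => i hi; rewrite /upd; case: eqP => // eik.
by move: hk; rewrite -eik hi.
Qed.

Lemma evalT_updD (M : lmodType K) (mul : M -> M -> M) (Hm : bilinear_op mul) a k u v t :
  count_mem k (leaves t) = 1%N ->
  evalT mul (upd a k (u + v)) t = evalT mul (upd a k u) t + evalT mul (upd a k v) t.
Proof.
elim: t => [i|l IHl r IHr] /=.
  by rewrite addn0 /upd; case: eqP => // -> _; rewrite eqxx.
rewrite count_cat.
case E: (count_mem k (leaves l)) => [|[|n]] /=.
- rewrite add0n => hr.
  have hl : k \notin leaves l by apply/count_memPn.
  have e w : evalT mul (upd a k w) l = evalT mul a l by apply: evalT_upd0.
  by rewrite !e IHr // bilDr.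
- move=> /eqP; rewrite -{2}(addn0 1%N) eqn_add2l => /eqP hr.
  have hl : k \notin leaves r by apply/count_memPn.
  have e w : evalT mul (upd a k w) r = evalT mul a r by apply: evalT_upd0.
  by rewrite !e IHl // bilDl.
- by rewrite !addSn.
Qed.

Lemma eval_id_updD (M : lmodType K) (mul : M -> M -> M) (Hm : bilinear_op mul) (P : poly_identity K) a k u v :
  (forall ct : K * btree, ct \in P.2 -> count_mem k (leaves ct.2) = 1%N) ->
  eval_id mul (upd a k (u + v)) P = eval_id mul (upd a k u) P + eval_id mul (upd a k v) P.
Proof.
move=> h; rewrite /eval_id -big_split /=; apply: eq_big_seq => ct hct.
by rewrite evalT_updD ?scalerDr // h.
Qed.

Lemma poly_mem (P : poly_identity K) ct i : polylinear P -> ct \in P.2 ->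
  (i \in leaves ct.2) = (i < P.1)%N.
Proof. by move=> /allP hP /hP /= hperm; rewrite (perm_mem hperm) mem_iota add0n leq0n. Qed.

Lemma poly_count (P : poly_identity K) ct k : polylinear P -> ct \in P.2 ->
  (k < P.1)%N -> count_mem k (leaves ct.2) = 1%N.
Proof.
move=> /allP hP /hP /= /permP hperm hk.
by rewrite hperm count_uniq_mem ?iota_uniq // mem_iota add0n leq0n hk.
Qed.

End Gen.

Section FSide.
Variables (K : fieldType) (Ids : poly_identity K -> Prop).
Hypothesis HIds : forall P, Ids P -> polylinear P.
Variables (X : Type) (F : lmodType K) (mF : F -> F -> F) (iota : X + X -> F).
Hypothesis Hfree : free_Var_alg Ids mF iota.
Variable phi : F -> F.
Hypothesis Hphi : alg_hom mF mF phi.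
Hypothesis Hphix : forall x, phi (iota (inl x)) = iota (inl x) /\
                     phi (iota (inr x)) = iota (inl x).

Lemma phi_idem f : phi (phi f) = phi f.
Proof.
case: Hfree => HV Hu.
have [f0 [hf0 g0 u0]] := Hu F mF HV (fun g => phi (iota g)).
have h1 := u0 phi Hphi (fun _ => erefl).
have h2 := u0 (phi \o phi) (hom_comp Hphi Hphi).
rewrite -/((phi \o phi) f) h2 ?h1 // => -[] x /=.
  by rewrite !(Hphix x).1.
by rewrite !(Hphix x).2 (Hphix x).1.
Qed.

Definition dlF f g := mF f (phi g).
Definition drF f g := mF (phi f) g.

Lemma phi_op i x y : phi (triop dlF drF mF i x y) = mF (phi x) (phi y).
Proof.
case: Hphi => _ hm.
case: i => [[|[|[|n]]] hi]; rewrite /triop /dlF /drF /= hm ?phi_idem //.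
Qed.

Lemma F_unmarked_phi a t : phi (evalT dlF a t) = evalT mF (phi \o a) t.
Proof.
elim: t => [i|l IHl r IHr] //=.
by case: Hphi => _ hm; rewrite /dlF hm phi_idem IHl IHr.
Qed.

Lemma F_marked H a t : has H (leaves t) ->
  evalH dlF drF mF H a t = evalT mF (fun i => if H i then a i else phi (a i)) t.
Proof.
elim: t => [i|l IHl r IHr] /=; first by rewrite orbF => ->.
rewrite has_cat.
case hl: (has H (leaves l)); case hr: (has H (leaves r)) => //= _.
- by rewrite IHl // IHr.
- rewrite /dlF IHl // evalH_unmarked ?hr // F_unmarked_phi; congr mF.
  by apply: evalT_ext => i hi /=; rewrite (notH (negbT hr) hi).
- rewrite /drF IHr // evalH_unmarked ?hl // F_unmarked_phi; congr mF.
  by apply: evalT_ext => i hi /=; rewrite (notH (negbT hl) hi).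
Qed.

Lemma part1 D : tri_identities_on Ids D dlF drF mF.
Proof.
split.
  by move=> i j x y z _ _ _; rewrite /drF /dlF !phi_op.
move=> P hP H [k hk Hk] a _.
rewrite /eval_idH.
transitivity (eval_id mF (fun i => if H i then a i else phi (a i)) P).
  apply: eq_big_seq => ct hct; rewrite F_marked //.
  by apply/hasP; exists k => //; rewrite (poly_mem _ (HIds hP) hct).
by case: Hfree => [[_ HV] _]; apply: HV.
Qed.

End FSide.

Section GS.
Variables (K : fieldType) (F : lmodType K) (dl dr pp : F -> F -> F) (S : F -> Prop).
Let V := gen_subalg dl dr pp S.
Lemma gs_gen s : S s -> V s.
Proof. by move=> hs P h1 _ _ _; apply: h1. Qed.
Lemma gs_0 : V 0.
Proof. by move=> P _ h2 _ _. Qed.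
Lemma gs_lin c x y : V x -> V y -> V (c *: x + y).
Proof. by move=> hx hy P h1 h2 h3 h4; exact: (h3 c x y (hx P h1 h2 h3 h4) (hy P h1 h2 h3 h4)). Qed.
Lemma gs_ops x y : V x -> V y -> [/\ V (dl x y), V (dr x y) & V (pp x y)].
Proof.
move=> hx hy; split=> P h1 h2 h3 h4;
  by case: (h4 x y (hx P h1 h2 h3 h4) (hy P h1 h2 h3 h4)).
Qed.
End GS.

Section TriA.
Variables (K : fieldType) (Ids : poly_identity K -> Prop).
Hypothesis HIds : forall P, Ids P -> polylinear P.
Variables (A : lmodType K) (dl dr pp : A -> A -> A).
Hypothesis HA : in_triVar Ids dl dr pp.

Lemma Hdl : bilinear_op dl. Proof. by case: HA. Qed.
Lemma Hdr : bilinear_op dr. Proof. by case: HA. Qed.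
Lemma Hpp : bilinear_op pp. Proof. by case: HA. Qed.
Lemma Htop i : bilinear_op (triop dl dr pp i).
Proof. by case: i => [[|[|[|n]]] hi]; rewrite /triop /=; case: HA. Qed.

Definition i0 : 'I_3 := @Ordinal 3 0 isT.
Definition i1 : 'I_3 := @Ordinal 3 1 isT.
Definition i2 : 'I_3 := @Ordinal 3 2 isT.

Lemma dr_any i x y z : dr (triop dl dr pp i x y) z = dr (dl x y) z.
Proof. by case: HA => _ _ _ [h _]; case: (h i i0 x y z I I I). Qed.
Lemma dl_any i x y z : dl x (triop dl dr pp i y z) = dl x (dl y z).
Proof. by case: HA => _ _ _ [h _]; case: (h i i0 x y z I I I). Qed.
Lemma dr_dr x y z : dr (dr x y) z = dr (dl x y) z.
Proof. exact: (dr_any i1). Qed.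
Lemma dl_dr x y z : dl x (dr y z) = dl x (dl y z).
Proof. exact: (dl_any i1). Qed.
Lemma HPhi P : Ids P -> forall H : pred nat, (exists2 k, (k < P.1)%N & H k) ->
  forall a, eval_idH dl dr pp H a P = 0.
Proof. by case: HA => _ _ _ [_ h] hP H hk a; apply: h. Qed.

Definition T := ((A -> A) * (A -> A))%type.
Definition Lf (a : A) : T := (fun c => dr a c, fun c => dl c a).
Lemma Lf_lin c a b : Lf (c *: a + b) = c *: Lf a + Lf b.
Proof.
rewrite /Lf; congr pair; apply/funext => y /=.
  by rewrite (Hdr c a b y).1.
by rewrite (Hdl c a b y).2.
Qed.
Lemma Lf0 : Lf 0 = 0.
Proof.
apply: (addrI (Lf 0)); rewrite addr0.
by rewrite -[X in X + _](scale1r (Lf 0)) -Lf_lin scale1r addr0.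
Qed.
Lemma LfE a a' : Lf a = Lf a' -> (forall y, dr a y = dr a' y) /\ (forall y, dl y a = dl y a').
Proof.
by move=> E; split=> y; [exact: (congr1 (fun p => p.1 y) E) | exact: (congr1 (fun p => p.2 y) E)].
Qed.
Lemma Lf_ext a a' : (forall y, dr a y = dr a' y) -> (forall y, dl y a = dl y a') -> Lf a = Lf a'.
Proof. by move=> h1 h2; rewrite /Lf; congr pair; apply/funext. Qed.
Lemma Lf_op i a b : Lf (triop dl dr pp i a b) = Lf (dl a b).
Proof. by apply: Lf_ext => y; rewrite ?dr_any ?dl_any. Qed.
Lemma Lf_cong i a a' b b' : Lf a = Lf a' -> Lf b = Lf b' ->
  Lf (triop dl dr pp i a b) = Lf (triop dl dr pp i a' b').
Proof.
move=> /LfE [ha1 ha2] /LfE [hb1 hb2]; apply: Lf_ext => y.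
  by rewrite !dr_any -dr_dr ha1 dr_dr hb2.
by rewrite !dl_any -dl_dr ha1 dl_dr hb2.
Qed.
Lemma Lf_congl a a' b b' : Lf a = Lf a' -> Lf b = Lf b' -> Lf (dl a b) = Lf (dl a' b').
Proof. exact: (Lf_cong i0). Qed.
Lemma Lf_zero a : Lf a = Lf 0 -> (forall y, dr a y = 0) /\ (forall y, dl y a = 0).
Proof.
move=> /LfE [h1 h2]; split=> y; rewrite ?h1 ?h2.
  exact: bil0l Hdr y.
exact: bil0r Hdl y.
Qed.

Definition imgL : {pred T} := fun p => `[< exists a, p = Lf a >].
Lemma imgL_closed : submod_closed imgL.
Proof.
split.
  by apply/asboolP; exists 0; rewrite Lf0.
move=> c u v /asboolP [a ->] /asboolP [b ->]; apply/asboolP; exists (c *: a + b).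
by rewrite Lf_lin.
Qed.
HB.instance Definition _ := GRing.isSubmodClosed.Build K T imgL imgL_closed.
Record Abar := MkAbar { abar_val :> T; _ : abar_val \in imgL }.
HB.instance Definition _ := [isSub for abar_val].
HB.instance Definition _ := [Choice of Abar by <:].
HB.instance Definition _ := [SubChoice_isSubLmodule of Abar by <:].
Definition B := (Abar * A)%type.

Lemma abarP (p : Abar) : exists a, val p = Lf a.
Proof. by case: p => x /= /asboolP. Qed.
Definition rep (p : Abar) : A := projT1 (cid (abarP p)).
Lemma repP p : Lf (rep p) = val p.
Proof. by rewrite /rep; case: cid => a /= ->. Qed.
Lemma toA_proof a : Lf a \in imgL.
Proof. by apply/asboolP; exists a. Qed.
Definition toA a : Abar := MkAbar (toA_proof a).
Lemma rep_toA a : Lf (rep (toA a)) = Lf a.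
Proof. by rewrite repP. Qed.
Lemma rep0 : Lf (rep 0) = Lf 0.
Proof. by rewrite repP Lf0. Qed.
Lemma repD c p q : Lf (rep (c *: p + q)) = Lf (c *: rep p + rep q).
Proof. by rewrite repP Lf_lin !repP. Qed.

Lemma addr6 (M : nmodType) (a1 a2 b1 b2 c1 c2 : M) :
  (a1 + a2) + (b1 + b2) + (c1 + c2) = (a1 + b1 + c1) + (a2 + b2 + c2).
Proof. by rewrite [X in X + _ = _]addrACA addrACA. Qed.

Definition mulB (u v : B) : B :=
  (toA (dl (rep u.1) (rep v.1)), dr (rep u.1) v.2 + dl u.2 (rep v.1) + pp u.2 v.2).

Lemma mulB_bil : bilinear_op mulB.
Proof.
move=> c u v w; split; rewrite /mulB; congr pair.
- apply: val_inj.
  transitivity (c *: Lf (dl (rep u.1) (rep w.1)) + Lf (dl (rep v.1) (rep w.1))); last by [].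
  rewrite /= (Lf_congl (repD c u.1 v.1) (erefl _)) (Hdl _ _ _ _).1 Lf_lin //.
- rewrite /= ((LfE (repD c u.1 v.1)).1 w.2) (Hdr _ _ _ _).1 (Hdl _ _ _ _).1 (Hpp _ _ _ _).1.
  by rewrite !scalerDr addr6.
- apply: val_inj.
  transitivity (c *: Lf (dl (rep w.1) (rep u.1)) + Lf (dl (rep w.1) (rep v.1))); last by [].
  rewrite /= (Lf_congl (erefl _) (repD c u.1 v.1)) (Hdl _ _ _ _).2 Lf_lin //.
- rewrite /= ((LfE (repD c u.1 v.1)).2 w.2) (Hdr _ _ _ _).2 (Hdl _ _ _ _).2 (Hpp _ _ _ _).2.
  by rewrite !scalerDr addr6.
Qed.

Lemma evalB1 (a : nat -> B) t :
  Lf (rep (evalT mulB a t).1) = Lf (evalT dl (fun i => rep (a i).1) t).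
Proof.
elim: t => [i|l IHl r IHr] //=.
by rewrite rep_toA; apply: Lf_congl.
Qed.

Lemma evalT_J (r : nat -> A) (H : pred nat) t :
  (forall i, H i -> Lf (r i) = Lf 0) -> has H (leaves t) -> Lf (evalT dl r t) = Lf 0.
Proof.
move=> hr; elim: t => [i|l IHl r' IHr] /=; first by rewrite orbF; apply: hr.
rewrite has_cat => /orP [h|h].
  by rewrite (Lf_congl (IHl h) (erefl _)) (bil0l Hdl).
by rewrite (Lf_congl (erefl _) (IHr h)) (bil0r Hdl).
Qed.

Lemma Lf_evalH H m t : Lf (evalH dl dr pp H m t) = Lf (evalT dl m t).
Proof.
elim: t => [i|l IHl r IHr] //=.
case: (has H (leaves l)); case: (has H (leaves r)).
- exact: (etrans (Lf_op i2 _ _) (Lf_congl IHl IHr)).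
- exact: (Lf_congl IHl IHr).
- exact: (etrans (Lf_op i1 _ _) (Lf_congl IHl IHr)).
- exact: (Lf_congl IHl IHr).
Qed.

Definition Hb (a : nat -> B) : pred nat := fun i => (a i).1 == 0.
Definition mixB (a : nat -> B) i := if Hb a i then (a i).2 else rep (a i).1.

Lemma Hb_J (a : nat -> B) i : Hb a i -> Lf (rep (a i).1) = Lf 0.
Proof. by move=> /eqP ->; rewrite rep0. Qed.

Lemma evalB2 (a : nat -> B) t :
  (forall i, i \in leaves t -> Hb a i || ((a i).2 == 0)) ->
  (evalT mulB a t).2 =
  if has (Hb a) (leaves t) then evalH dl dr pp (Hb a) (mixB a) t else 0.
Proof.
elim: t => [i|l IHl r IHr] /=.
  move=> /(_ i (mem_head _ _)); rewrite orbF /mixB.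
  by case: (Hb a i) => //= /eqP.
move=> h.
have hl : forall i, i \in leaves l -> Hb a i || ((a i).2 == 0).
  by move=> i hi; apply: h; rewrite mem_cat hi.
have hr : forall i, i \in leaves r -> Hb a i || ((a i).2 == 0).
  by move=> i hi; apply: h; rewrite mem_cat hi orbT.
have [e1 _] := LfE (evalB1 a l).
have [_ e2] := LfE (evalB1 a r).
rewrite e1 e2 IHl // IHr // has_cat.
case Hl: (has (Hb a) (leaves l)); case Hr: (has (Hb a) (leaves r)) => /=.
- have [z1 _] := Lf_zero (evalT_J (@Hb_J a) Hl).
  have [_ z2] := Lf_zero (evalT_J (@Hb_J a) Hr).
  by rewrite z1 z2 !add0r.
- rewrite (bil0r Hdr) (bil0r Hpp) add0r addr0 [evalH _ _ _ _ _ r]evalH_unmarked ?Hr //.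
  congr dl; apply: evalT_ext => i hi; rewrite /mixB.
  by rewrite (notH (negbT Hr) hi).
- rewrite (bil0l Hdl) (bil0l Hpp) !addr0 [evalH _ _ _ _ _ l]evalH_unmarked ?Hl //.
  congr dr; apply: evalT_ext => i hi; rewrite /mixB.
  by rewrite (notH (negbT Hl) hi).
- by rewrite (bil0r Hdr) (bil0l Hdl) (bil0l Hpp) !addr0.
Qed.

Lemma toA_lin c a b : toA (c *: a + b) = c *: toA a + toA b.
Proof. by apply: val_inj; rewrite /= Lf_lin. Qed.
Lemma toA0 : toA 0 = 0.
Proof. by apply: val_inj; rewrite /= Lf0. Qed.

Lemma sum_pair0 (s : seq (K * btree)) (f : K * btree -> A) :
  \sum_(ct <- s) ct.1 *: ((0 : Abar), f ct) = ((0 : Abar), \sum_(ct <- s) ct.1 *: f ct).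
Proof.
elim: s => [|ct s IH]; first by rewrite !big_nil.
by rewrite !big_cons IH; congr pair => /=; rewrite ?scaler0 ?addr0.
Qed.

Lemma sum_pairA (s : seq (K * btree)) (f : K * btree -> A) :
  \sum_(ct <- s) ct.1 *: (toA (f ct), (0 : A)) = (toA (\sum_(ct <- s) ct.1 *: f ct), (0 : A)).
Proof.
elim: s => [|ct s IH]; first by rewrite !big_nil /= toA0.
by rewrite !big_cons IH; congr pair => /=; rewrite ?toA_lin ?scaler0 ?addr0.
Qed.

Lemma leaves_ne t : exists i, i \in leaves t.
Proof.
elim: t => [i|l [i hi] r _] /=; first by exists i; rewrite mem_head.
by exists i; rewrite mem_cat hi.
Qed.

Lemma B_in_Var : in_Var Ids mulB.
Proof.
split; first exact: mulB_bil.
move=> P hP.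
have hpl := HIds hP.
pose Q m := forall a : nat -> B,
  (forall i, (i < m)%N -> (a i).1 = 0 \/ (a i).2 = 0) -> eval_id mulB a P = 0.
have base : Q P.1.
  move=> a hpure.
  have hleaf : forall ct, ct \in P.2 -> forall i, i \in leaves ct.2 ->
      Hb a i || ((a i).2 == 0).
    move=> ct hct i hi; rewrite (poly_mem _ hpl hct) in hi.
    by rewrite /Hb; case: (hpure i hi) => ->; rewrite eqxx ?orbT.
  case: (boolP (has (Hb a) (iota 0 P.1))) => hH.
  - move/hasP: hH => [k hk Hk]; rewrite mem_iota add0n leq0n /= in hk.
    have hkt : forall ct, ct \in P.2 -> has (Hb a) (leaves ct.2).
      by move=> ct hct; apply/hasP; exists k => //; rewrite (poly_mem _ hpl hct).
    rewrite /eval_id.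
    transitivity (\sum_(ct <- P.2) ct.1 *: ((0 : Abar),
        evalH dl dr pp (Hb a) (mixB a) ct.2)).
      apply: eq_big_seq => ct hct; congr (_ *: _).
      rewrite (surjective_pairing (evalT mulB a ct.2)); congr pair.
        apply: val_inj; rewrite -repP evalB1.
        by rewrite (evalT_J (@Hb_J a) (hkt ct hct)) Lf0.
      by rewrite evalB2 ?hkt //; apply: hleaf.
    have e0 := @HPhi P hP (Hb a) (ex_intro2 _ _ k hk Hk) (mixB a).
    by rewrite /eval_idH in e0; rewrite sum_pair0 e0.
  - have [P2nil|npos] : P.2 = [::] \/ (0 < P.1)%N.
      case E: P.2 => [|ct s]; [by left|right].
      have [i hi] := leaves_ne ct.2.
      have hct : ct \in P.2 by rewrite E mem_head.
      rewrite (poly_mem _ hpl hct) in hi.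
      exact: leq_ltn_trans (leq0n i) hi.
      by rewrite /eval_id P2nil big_nil.
    rewrite /eval_id.
    transitivity (\sum_(ct <- P.2) ct.1 *: (toA
        (evalH dl dr pp (pred1 0%N) (fun i => rep (a i).1) ct.2), (0 : A))).
      apply: eq_big_seq => ct hct; congr (_ *: _).
      have hnt : ~~ has (Hb a) (leaves ct.2).
        apply/hasPn => i hi; apply: (hasPn hH).
        by rewrite mem_iota add0n leq0n /= -(poly_mem _ hpl hct).
      rewrite (surjective_pairing (evalT mulB a ct.2)); congr pair.
        apply: val_inj; rewrite -repP evalB1 /=.
        by rewrite Lf_evalH.
      by rewrite evalB2 ?(negbTE hnt) //; apply: hleaf.
    rewrite sum_pairA.
    have -> : \sum_(ct <- P.2) ct.1 *:
        evalH dl dr pp (pred1 0%N) (fun i => rep (a i).1) ct.2 = 0.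
      by apply: HPhi => //; exists 0%N.
    by rewrite toA0.
have step : forall m, (m < P.1)%N -> Q m.+1 -> Q m.
  move=> m hm IH a hpure.
  have ea : a = upd a m ((((a m).1, 0) : B) + (0, (a m).2)).
    apply/funext => i; rewrite /upd; case: eqP => // ->.
    by case: (a m) => p x; congr pair; rewrite /= ?addr0 ?add0r.
  rewrite ea (eval_id_updD mulB_bil); last first.
    by move=> ct hct; apply: (poly_count hpl hct hm).
  have lt_m : forall i, (i < m.+1)%N -> i != m -> (i < m)%N.
    by move=> i; rewrite ltnS leq_eqVlt => /orP [/eqP -> /eqP|//].
  have h1 : eval_id mulB (upd a m ((a m).1, 0)) P = 0.
    apply: IH => i hi; rewrite /upd; case: eqP => [_|/eqP ne]; first by right.
    by apply: hpure; apply: lt_m.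
  have h2 : eval_id mulB (upd a m (0, (a m).2)) P = 0.
    apply: IH => i hi; rewrite /upd; case: eqP => [_|/eqP ne]; first by left.
    by apply: hpure; apply: lt_m.
  by rewrite h1 h2 addr0.
have Qd : forall d, Q (P.1 - d)%N.
  elim=> [|d IHd]; first by rewrite subn0.
  case: (ltnP d P.1) => hd.
    apply: step; first by rewrite ltn_subrL /= (leq_ltn_trans (leq0n d) hd).
    by rewrite subnSK.
  have e1 : (P.1 - d.+1 = 0)%N by apply/eqP; rewrite subn_eq0 leqW.
  have e2 : (P.1 - d = 0)%N by apply/eqP; rewrite subn_eq0.
  by rewrite e1; rewrite e2 in IHd.
move=> a; have := Qd P.1; rewrite subnn; apply=> i.
by rewrite ltn0.
Qed.

Lemma LfD x y : Lf (x + y) = Lf x + Lf y.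
Proof. by rewrite -[x in LHS]scale1r Lf_lin scale1r. Qed.
Lemma rep0_dr y : dr (rep 0) y = 0.
Proof. exact: (Lf_zero rep0).1. Qed.
Lemma rep0_dl y : dl y (rep 0) = 0.
Proof. exact: (Lf_zero rep0).2. Qed.
Lemma rep_toA0 z : Lf (rep (toA (rep 0 + z))) = Lf z.
Proof. by rewrite rep_toA LfD rep0 Lf0 add0r. Qed.

Section Chi.
Variables (X : Type) (F : lmodType K) (mF : F -> F -> F) (iota : X + X -> F).
Hypothesis Hfree : free_Var_alg Ids mF iota.
Variable phi : F -> F.
Hypothesis Hphi : alg_hom mF mF phi.
Hypothesis Hphix : forall x, phi (iota (inl x)) = iota (inl x) /\
                     phi (iota (inr x)) = iota (inl x).
Variable alpha : X -> A.

Definition betaB (g : X + X) : B :=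
  match g with inl x => (toA (alpha x), 0) | inr x => (0, alpha x) end.
Definition rhoB (u : B) : B := (toA (rep u.1 + u.2), 0).

Lemma rho_hom : alg_hom mulB mulB rhoB.
Proof.
split.
  move=> c u v; rewrite /rhoB; congr pair; last by rewrite /= scaler0 addr0.
  apply: val_inj.
  transitivity (Lf (c *: (rep u.1 + u.2) + (rep v.1 + v.2))); last by rewrite Lf_lin.
  rewrite /= LfD repD -LfD; congr Lf.
  by rewrite scalerDr addrACA.
move=> u v; rewrite /rhoB /mulB /=; congr pair.
  apply: val_inj => /=.
  rewrite (Lf_congl (rep_toA _) (rep_toA _)) LfD rep_toA !LfD.
  have e1 : Lf (dr (rep u.1) v.2) = Lf (dl (rep u.1) v.2) := Lf_op i1 _ _.
  have e2 : Lf (pp u.2 v.2) = Lf (dl u.2 v.2) := Lf_op i2 _ _.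
  rewrite e1 e2 (bilDl Hdl) !(bilDr Hdl) !LfD.
  by rewrite !addrA.
by rewrite (bil0r Hdr) (bil0l Hdl) (bil0l Hpp) !addr0.
Qed.

Lemma part2 :
  let dlF := fun f g => mF f (phi g) in
  let drF := fun f g => mF (phi f) g in
  let V := gen_subalg dlF drF mF (fun f => exists x, f = iota (inr x)) in
  exists chi : F -> A,
    [/\ tri_hom_on V dlF drF mF dl dr pp chi,
        (forall x, chi (iota (inr x)) = alpha x) &
        forall chi' : F -> A, tri_hom_on V dlF drF mF dl dr pp chi' ->
          (forall x, chi' (iota (inr x)) = alpha x) ->
          forall f, V f -> chi' f = chi f].
Proof.
move=> dlF drF V.
have [psi [hpsi gpsi upsi]] := Hfree.2 B mulB B_in_Var betaB.
have comm : forall f, psi (phi f) = rhoB (psi f).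
  have [f0 [_ _ u0]] := Hfree.2 B mulB B_in_Var (fun g => rhoB (psi (iota g))).
  have e1 := u0 (rhoB \o psi) (hom_comp hpsi rho_hom) (fun _ => erefl).
  have e2 := u0 (psi \o phi) (hom_comp Hphi hpsi).
  move=> f; rewrite -/((psi \o phi) f) e2 -?e1 // => -[] x /=.
    rewrite (Hphix x).1 gpsi /betaB /rhoB; congr pair; apply: val_inj => /=.
    by rewrite addr0 rep_toA.
  rewrite (Hphix x).2 !gpsi /betaB /rhoB; congr pair; apply: val_inj => /=.
  by rewrite LfD rep0 Lf0 add0r.
have V1 : forall f, V f -> (psi f).1 = 0.
  move=> f Vf; apply: (Vf (fun f => (psi f).1 = 0)).
  - by move=> s [x ->]; rewrite gpsi.
  - by rewrite (hom0 hpsi).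
  - move=> c x y hx hy; case: hpsi => hl _.
    by rewrite hl /= hx hy scaler0 addr0.
  - move=> x y hx hy; case: hpsi => _ hm.
    rewrite /dlF /drF !hm !comm; split; apply: val_inj => /=.
    + by rewrite hx (Lf_congl rep0 (erefl _)) (bil0l Hdl) Lf0.
    + by rewrite hy (Lf_congl (erefl _) rep0) (bil0r Hdl) Lf0.
    + by rewrite hx (Lf_congl rep0 (erefl _)) (bil0l Hdl) Lf0.
pose chi f := (psi f).2.
have chi_hom : tri_hom_on V dlF drF mF dl dr pp chi.
  split.
    by move=> c x y _ _; case: hpsi => hl _; rewrite /chi hl.
  move=> x y Vx Vy; have z1 := V1 _ Vx; have z2 := V1 _ Vy.
  case: hpsi => _ hm; rewrite /chi /dlF /drF !hm !comm /mulB /rhoB /= z1 z2.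
  split.
  - by rewrite rep0_dr (bil0r Hpp) add0r addr0 (LfE (rep_toA0 _)).2.
  - by rewrite (LfE (rep_toA0 _)).1 (bil0l Hdl) (bil0l Hpp) !addr0.
  - by rewrite rep0_dr rep0_dl !add0r.
exists chi; split => //.
  by move=> x; rewrite /chi gpsi.
move=> chi' [hl' hm'] g' f Vf.
have chi'0 : chi' 0 = 0.
  have V0 : V 0 by apply: gs_0.
  have h := hl' 1 0 0 V0 V0.
  rewrite !scale1r addr0 in h.
  by apply: (addrI (chi' 0)); rewrite addr0 -h.
apply: (proj2 (Vf (fun f => V f /\ chi' f = chi f) _ _ _ _)).
- by move=> s [x ->]; split; [apply: gs_gen; exists x | rewrite g' /chi gpsi].
- split; first exact: gs_0.
  by rewrite chi'0 /chi (hom0 hpsi).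
- move=> c x y [Vx ex] [Vy ey]; split; first exact: gs_lin.
  by rewrite hl' // ex ey (chi_hom.1 c x y Vx Vy).
- move=> x y [Vx ex] [Vy ey].
  have [V1' V2' V3'] := gs_ops Vx Vy.
  have [h1 h2 h3] := hm' x y Vx Vy.
  have [k1 k2 k3] := chi_hom.2 x y Vx Vy.
  by split; split => //; rewrite ?h1 ?h2 ?h3 ?k1 ?k2 ?k3 ex ey.
Qed.

End Chi.

End TriA.

Theorem theorem3p3 (K : fieldType) (Ids : poly_identity K -> Prop)
  (HIds : forall P, Ids P -> polylinear P)
  (X : Type) (F : lmodType K) (mF : F -> F -> F) (iota : X + X -> F)
  (Hfree : free_Var_alg Ids mF iota)
  (phi : F -> F) (Hphi : alg_hom mF mF phi)
  (Hphix : forall x, phi (iota (inl x)) = iota (inl x) /\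
                     phi (iota (inr x)) = iota (inl x)) :
  let dlF := fun f g => mF f (phi g) in
  let drF := fun f g => mF (phi f) g in
  let ppF := mF in
  let V := gen_subalg dlF drF ppF (fun f => exists x, f = iota (inr x)) in
  tri_identities_on Ids V dlF drF ppF /\
  forall (A : lmodType K) (dl dr pp : A -> A -> A),
    in_triVar Ids dl dr pp ->
    forall alpha : X -> A,
      exists chi : F -> A,
        [/\ tri_hom_on V dlF drF ppF dl dr pp chi,
            (forall x, chi (iota (inr x)) = alpha x) &
            forall chi' : F -> A, tri_hom_on V dlF drF ppF dl dr pp chi' ->
              (forall x, chi' (iota (inr x)) = alpha x) ->
              forall f, V f -> chi' f = chi f].
Proof.
move=> dlF drF ppF V; split.
  exact: (part1 HIds Hfree Hphi Hphix V).
move=> A dl dr pp HA alpha.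
exact: (part2 HIds HA Hfree Hphi Hphix alpha).
Qed.
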